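(* Let $m,n\ge0$ be integers with $m+n$ even. If $n>m+2$, then there is no alternating $\mathcal B_{m,n}$-permutation.
   Context: For integers $i\le j$, $[i,j]=\{\ell\in\mathbb Z: i\le\ell\le j\}$ and $[N]=[1,N]$. $\mathcal B_{m,n}$ is the collection of nonempty subsets $I\subseteq[m+n]$ such that whenever $|I|\ge2$, $I\cap[m+1,m+n]$ is either $\emptyset$ or $[m+r,m+n]$ for some $1\le r\le n$ (a building set on $[m+n]$). For a building set $\mathcal B$ on $S$ (collection of nonempty subsets of $S$ containing all singletons, closed under unions of intersecting members; its connected components are its inclusion-maximal members; $\mathcal B|_I=\{J\in\mathcal B:J\subseteq I\}$) with $|S|=N$, a $\mathcal B$-permutation is a sequence $(x_1\cdots x_N)$ listing each element of $S$ once such that for each $i$, $x_i$ and $\max\{x_1,\dots,x_i\}$ lie in the same connected component of $\mathcal B|_{\{x_1,\dots,x_i\}}$; it is alternating if $x_1>x_2<x_3>\cdots$. *)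

(* Defs.v *)
From mathcomp Require Import all_boot.
Set Implicit Arguments. Unset Strict Implicit. Unset Printing Implicit Defensive.

Definition building_set (k : nat) (S : {set 'I_k}) (B : {set {set 'I_k}}) : bool :=
  [forall J in B, (J != set0) && (J \subset S)] &&
  [forall x in S, [set x] \in B] &&
  [forall J in B, forall K in B, (J :&: K != set0) ==> (J :|: K \in B)].

Definition restrict (k : nat) (B : {set {set 'I_k}}) (I : {set 'I_k}) :
  {set {set 'I_k}} := [set J in B | J \subset I].

Definition components (k : nat) (B : {set {set 'I_k}}) : {set {set 'I_k}} :=
  [set J in B | [forall K in B, (J \subset K) ==> (K == J)]].

Definition same_component (k : nat) (B : {set {set 'I_k}}) (x y : 'I_k) : bool :=
  [exists J in components B, (x \in J) && (y \in J)].

(* Index i here is 0-based: prefix = take i.+1 s. *)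
Definition B_permutation (k : nat) (S : {set 'I_k}) (B : {set {set 'I_k}})
  (s : seq 'I_k) : Prop :=
  perm_eq s (enum S) /\
  forall i x, i < size s -> x = nth x s i ->
    let pre := take i.+1 s in
    exists2 y, (y \in pre) && all (fun z : 'I_k => (z <= y)%N) pre &
      same_component (restrict B [set z in pre]) x y.

Definition alternating (k : nat) (s : seq 'I_k) : Prop :=
  forall j, j.+1 < size s ->
    let t := map (@nat_of_ord k) s in
    if odd j then nth 0 t j < nth 0 t j.+1 else nth 0 t j > nth 0 t j.+1.

(* B_{m,n} on [m+n] = {1,...,m+n} inside 'I_(m+n).+1 *)
Definition ground (m n : nat) : {set 'I_(m + n).+1} := [set i : 'I_(m + n).+1 | 0 < i].

Definition Bmn (m n : nat) : {set {set 'I_(m + n).+1}} :=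
  [set I | [&& I != set0, I \subset ground m n &
     (1 < #|I|) ==>
       ((I :&: [set i : 'I_(m + n).+1 | m.+1 <= i] == set0) ||
        [exists r : 'I_n.+1, (0 < r) && (I :&: [set i : 'I_(m + n).+1 | m.+1 <= i] == [set i : 'I_(m + n).+1 | m + r <= i])])]].

(* Main.v *)
Require Import Defs.
From mathcomp Require Import all_boot.

Lemma keyK (m n : nat) (s : seq 'I_(m + n).+1)
  (HB : B_permutation (ground m n) (Bmn m n) s) i : i < size s ->
  exists2 y : 'I_(m + n).+1, (y \in take i.+1 s) && all (fun z : 'I_(m + n).+1 => (z <= y)%N) (take i.+1 s) &
   (y = nth ord0 s i \/ forall w z : 'I_(m + n).+1, ((w == nth ord0 s i) || (w == y)) -> m < w -> w <= z -> z \in take i.+1 s).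
Proof.
move=> Hi; case: HB => _ H.
have [y Hy Hc] := H i (nth ord0 s i) Hi (set_nth_default _ _ Hi).
exists y => //.
case: (eqVneq y (nth ord0 s i)) => [->|Hne]; first by left.
right => w z Hw Hmw Hwz.
case/existsP: Hc => J /andP [HJ /andP [HxJ HyJ]].
move: HJ; rewrite inE => /andP [HJ _].
move: HJ; rewrite inE => /andP [HJ Jsub].
move: HJ; rewrite inE => /and3P [_ _ Himp].
have Hc1 : 1 < #|J|.
  apply/card_gt1P; exists y, (nth ord0 s i); split => //.
have HwJ : w \in J by case/orP: Hw => /eqP ->.
have HzJ : z \in J.
  case/orP: (implyP Himp Hc1) => [/eqP/setP/(_ w)|/existsP [r /andP [_ /eqP/setP Heq]]].
    by rewrite !inE HwJ Hmw.
  move: (Heq w) (Heq z); rewrite !inE HwJ Hmw /= => Hw1.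
  have Hz : m + r <= z by apply: leq_trans Hwz; rewrite -Hw1.
  by rewrite Hz => /andP [].
by move/subsetP: Jsub => /(_ z HzJ); rewrite inE.
Qed.
From mathcomp Require Import zify.
Lemma pairc (u : seq bool) :
  (forall i, i.+1 < size u -> ~~ odd i -> ~~ nth false u i) ->
  count id u <= count negb u + 1.
Proof.
move: {2}(size u) (leqnn (size u)) => k; elim: k u => [|k IH] [|a [|b u]] //= Hs H.
- by case: a {H Hs}.
- have Ha : ~~ a by apply: (H 0).
  have IHu := IH u (ltnW Hs) (fun i Hi Hev => H i.+2 Hi ltac:(by rewrite /= negbK)).
  clear H; move: Ha IHu; case: a; case: b => //= _ IHu; lia.
Qed.
Theorem lemma6p2 (m n : nat) :
  ~~ odd (m + n) -> m + 2 < n ->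
  ~ (exists s : seq 'I_(m + n).+1,
        B_permutation (ground m n) (Bmn m n) s /\ alternating s).
Proof.
move=> _ Hmn [s [HB Halt]].
have Hperm := proj1 HB.
have Hmem : forall x : 'I_(m + n).+1, (x \in s) = (0 < x).
  by move=> x; rewrite (perm_mem Hperm) mem_enum inE.
have Hu : uniq s by rewrite (perm_uniq Hperm) enum_uniq.
have Hmax : (ord_max : 'I_(m + n).+1) \in s by rewrite Hmem /=; lia.
set p := index ord_max s.
have Hp : p < size s by rewrite index_mem.
have Hnp : nth ord0 s p = ord_max by apply: nth_index.
have Hnotin : forall j, j < size s -> (nth ord0 s j \in take j s) = false.
  by move=> j Hj; rewrite in_take ?mem_nth // index_uniq // ltnn.
have Hin : forall j k, j < k -> j < size s -> nth ord0 s j \in take k s.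
  by move=> j k Hjk Hj; rewrite in_take ?mem_nth // index_uniq.
have Ha : forall j, j.+1 < size s -> if odd j then nth ord0 s j < nth ord0 s j.+1
                                     else nth ord0 s j.+1 < nth ord0 s j.
  move=> j Hj; move: (Halt j Hj) => /=.
  by rewrite !(nth_map ord0) // ltnW.
have HE : ~~ odd p.
  case Hp0: p => [|q] //.
  have := Ha q; rewrite -Hp0 => /(_ Hp); rewrite Hnp /=; idtac.
  by rewrite Hp0 /=; case: (odd q) => //; rewrite ltnNge -ltnS ltn_ord.
have HBf : forall i, i < p -> nth ord0 s i <= m.
  move=> i Hip; rewrite leqNgt; apply/negP => Hmi.
  move: HE Hip Hp; case Hp2: p => [|[|q]] //= HE Hip Hp'.
  have Hq := Ha q (ltnW Hp'); rewrite negbK in HE; rewrite (negbTE HE) in Hq.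
  have [y /andP [_ Hall] [Hyx|Hall2]] := @keyK m n s HB _ (ltnW Hp').
    have := allP Hall (nth ord0 s q) (Hin _ _ (ltnW (ltnSn _)) (ltnW (ltnW Hp'))).
    by rewrite Hyx leqNgt Hq.
  have Hiy := allP Hall (nth ord0 s i) (Hin _ _ Hip (ltn_trans Hip Hp')).
  have := Hall2 y ord_max ltac:(by rewrite eqxx orbT) (leq_trans Hmi Hiy) (leq_ord _).
  by rewrite in_take // -/p Hp2 ltnn.
have HD : forall j, odd j -> p < j -> j.+1 < size s -> nth ord0 s j <= m.
  move=> j Hodd Hpj Hj; rewrite leqNgt; apply/negP => Hm.
  have Hj' := Ha j Hj; rewrite Hodd in Hj'.
  have [y /andP [_ Hall] [Hyx|Hall2]] := @keyK m n s HB _ (ltnW Hj).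
    have Hmy := allP Hall ord_max ltac:(by rewrite in_take // ltnS ltnW).
    have Hy : y = ord_max by apply/val_inj/eqP; rewrite eqn_leq Hmy -ltnS ltn_ord.
    have := index_uniq ord0 (ltnW Hj) Hu; rewrite -Hyx Hy -/p => Hpj'.
    by rewrite Hpj' ltnn in Hpj.
  have := Hall2 (nth ord0 s j) (nth ord0 s j.+1) ltac:(by rewrite eqxx) Hm (ltnW Hj').
  by rewrite Hnotin.
set u := map (fun x : 'I_(m + n).+1 => m < x) (drop p.+1 s).
have Hpc : count id u <= count negb u + 1.
  apply: pairc => i; rewrite size_map size_drop => Hi Hev.
  rewrite (nth_map ord0) ?size_drop; last by lia.
  rewrite nth_drop -leqNgt; apply: HD.
  - by rewrite addSn /= oddD (negbTE HE) (negbTE Hev).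
  - by rewrite addSn ltnS leq_addr.
  - lia.
rewrite !count_map in Hpc.
have Hs : s = take p s ++ ord_max :: drop p.+1 s.
  by rewrite -Hnp -drop_nth // cat_take_drop.
have H0 : count (fun x : 'I_(m + n).+1 => m < x) (take p s) = 0.
  apply/eqP; rewrite -leqn0 leqNgt -has_count; apply/hasPn => x Hx.
  have Hxs := mem_take Hx; move: Hx; rewrite in_take // => Hx.
  by rewrite -(nth_index ord0 Hxs) -leqNgt HBf.
have Hv : perm_eq (map val s) [seq x <- iota 0 (1 + m + n) | 0 < x].
  apply: uniq_perm; first by rewrite (map_inj_uniq val_inj).
    by rewrite filter_uniq // iota_uniq.
  move=> x; rewrite mem_filter mem_iota /= add0n.
  case: (ltnP x (m + n).+1) => Hx.
    have -> : x = val (Ordinal Hx) by [].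
    rewrite (mem_map val_inj) Hmem; by rewrite andbT.
  rewrite andbF; apply/negbTE.
  by apply/mapP => [[y _ Hy]]; move: Hx; rewrite Hy leqNgt ltn_ord.
have HI : iota 0 (1 + m + n) = iota 0 1 ++ iota 1 m ++ iota (1 + m) n.
  by rewrite iotaD iotaD catA.
have H1 : n <= count (fun x : 'I_(m + n).+1 => m < x) s.
  have := permP Hv (fun x => m < x); rewrite count_map => ->.
  rewrite count_filter HI !count_cat.
  have -> : count (predI (fun x => m < x) (fun x => 0 < x)) (iota (1 + m) n) = n.
    rewrite -{2}(size_iota (1 + m) n); apply/eqP; rewrite -all_count.
    apply/allP => x; rewrite mem_iota /= => /andP [H _]; by apply/andP; split; lia.
  by rewrite leq_addl.
have H2 : count (fun x : 'I_(m + n).+1 => ~~ (m < x)) s <= m.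
  have := permP Hv (fun x => ~~ (m < x)); rewrite count_map => ->.
  rewrite count_filter HI !count_cat.
  have -> : count (predI (fun x => ~~ (m < x)) (fun x => 0 < x)) (iota (1 + m) n) = 0.
    apply/eqP; rewrite -leqn0 leqNgt -has_count; apply/hasPn => x.
    by rewrite mem_iota /= => /andP [H _]; apply/negP => /andP [Hx _]; lia.
  have := count_size (predI (fun x => ~~ (m < x)) (fun x => 0 < x)) (iota 1 m).
  rewrite size_iota /= addn0 add0n; lia.
move: H1 H2; rewrite Hs !count_cat H0 /= => H1 H2.
have : m < m + n by lia.
move=> Hlt; rewrite Hlt /= in H1 H2.
have Hpc2 : count (fun x : 'I_(m + n).+1 => m < x) (drop p.+1 s) <= count (fun x : 'I_(m + n).+1 => ~~ (m < x)) (drop p.+1 s) + 1 by exact: Hpc.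
lia.
Qed.
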